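(* For every $n\geq 7$, in the graph $H(n)$ the set $Z$ of vertices $v$ such that a single cop starting at $v$ can guarantee capturing a single robber (who chooses his starting vertex after the cop) by round $n-4$ is exactly $\{1,2\}$.
   Context: The graph $H(7)$ has vertex set $\{1,\dots,7\}$: vertices $6,2,1,4$ form a path $6-2-1-4$; vertices $3$ and $5$ are each adjacent to all of $6,2,1,4$ and not adjacent to each other; vertex $7$ is adjacent exactly to $6$, $4$ and $3$. For $n\geq 8$, $H(n)$ is obtained from $H(n-1)$ by adding vertex $n$ adjacent exactly to $n-1$, $n-3$ and $n-4$. Graphs are reflexive (a player may stay in place). In the one-cop, one-robber game, the cop chooses a starting vertex (round 0), then the robber chooses his; in each subsequent round the cop moves to an adjacent vertex or stays, then the robber does; the robber is captured when he occupies the cop's vertex; both sides have full information. The round of capture is counted with round 0 as the initial placement. *)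

(* Defs.v *)
From mathcomp Require Import all_boot.
Set Implicit Arguments. Unset Strict Implicit. Unset Printing Implicit Defensive.

Definition vert (n v : nat) : bool := (1 <= v) && (v <= n).

(* Directed description of the edges of H(7). *)
Definition base_edge (u v : nat) : bool :=
  [|| (u == 6) && (v == 2), (u == 2) && (v == 1), (u == 1) && (v == 4),
      (u == 3) && (v \in [:: 6; 2; 1; 4]),
      (u == 5) && (v \in [:: 6; 2; 1; 4]) |
      (u == 7) && (v \in [:: 6; 4; 3])].

(* Edges added by the recursion: for u >= 8, u ~ u-1, u-3, u-4. *)
Definition rec_edge (u v : nat) : bool :=
  (8 <= u) && [|| v == u - 1, v == u - 3 | v == u - 4].

Definition adj (n u v : nat) : bool :=
  [&& vert n u, vert n v &
      [|| base_edge u v, base_edge v u, rec_edge u v | rec_edge v u]].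

(* Closed neighbourhood (graphs are reflexive: a player may stay). *)
Definition cnbr (n u v : nat) : bool := ((u == v) && vert n u) || adj n u v.

Definition verts (n : nat) : seq nat := iota 1 n.

(* cop_wins n k c r : the position has the cop at c and the robber at r,
   with the cop to move next (i.e. at the end of a round).  A round consists of
   a cop move then a robber move; capture happens as soon as both occupy
   the same vertex. *)
Fixpoint cop_wins (n k c r : nat) : bool :=
  match k with
  | 0 => c == r
  | k'.+1 =>
      (c == r) ||
      has (fun c' => (c' == r) ||
                     all (fun r' => cop_wins n k' c' r')
                         (filter (cnbr n r) (verts n)))
          (filter (cnbr n c) (verts n))
  end.

Definition cop_start_wins (n k v : nat) : Prop :=
  vert n v /\ forall r, vert n r -> cop_wins n k v r.

(* Main.v *)
Require Import Defs.
From mathcomp Require Import all_boot zify.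

Definition adjb (u v : nat) : bool := [|| u+1==v, v+1==u, u+3==v, v+3==u, u+4==v, v+4==u, (u==1)&&(v==3) | (u==3)&&(v==1)].
Definition adjP (u v : nat) : Prop := u+1=v \/ v+1=u \/ u+3=v \/ v+3=u \/ u+4=v \/ v+4=u \/ (u = 1 /\ v = 3) \/ (u = 3 /\ v = 1).

Lemma adjbP u v : reflect (adjP u v) (adjb u v).
Proof. rewrite /adjb /adjP; apply: (iffP idP) => H; lia. Qed.

Lemma base_big u v : ~~ ((u <= 8) && (v <= 8)) -> base_edge u v = false.
Proof. rewrite /base_edge !inE => H. apply/negbTE. lia. Qed.
Lemma rec_big u v : ~~ ((u <= 8) && (v <= 8)) -> (rec_edge u v || rec_edge v u) = adjb u v.
Proof. rewrite /rec_edge /adjb => H. lia. Qed.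

Lemma edgesE u v : 1 <= u -> 1 <= v ->
  [|| base_edge u v, base_edge v u, rec_edge u v | rec_edge v u] = adjb u v.
Proof.
move=> hu hv; have [sm|bg] := boolP ((u <= 8) && (v <= 8)).
  have H : all (fun u => all (fun v =>
     [|| base_edge u v, base_edge v u, rec_edge u v | rec_edge v u] == adjb u v) (iota 1 8)) (iota 1 8)
    by vm_compute.
  case/andP: sm => su sv.
  have Mu : u \in iota 1 8 by rewrite mem_iota; lia.
  have Mv : v \in iota 1 8 by rewrite mem_iota; lia.
  by move/allP: H => /(_ u Mu) /allP /(_ v Mv) /eqP.
rewrite (@base_big u v bg) (@base_big v u) /=; last by rewrite andbC.
exact: rec_big.
Qed.

Lemma cnbrE n u v : cnbr n u v <-> [/\ 1 <= u <= n, 1 <= v <= n & (u = v \/ adjP u v)].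
Proof.
rewrite /cnbr /adj /vert; split.
- case/orP => [/andP[/eqP -> h]|/and3P[h1 h2]]; first by split => //; left.
  case/andP: h1 => a b; case/andP: h2 => c d.
  rewrite edgesE // => /adjbP H; split => //; [apply/andP|apply/andP|right] => //.
- case=> /andP[h1 h2] /andP[h3 h4] [->|H]; first by apply/orP; left; rewrite eqxx /=; apply/andP.
  apply/orP; right. rewrite h1 h2 h3 h4 /= edgesE //. exact/adjbP.
Qed.

Definition T n c := n - 4 + (c + 1) %/ 4.
Definition tt n c r :=
  if c == r then 0 else if adjb c r then 1 else if r < c then T n c else
  if (r - c) %% 4 == 2 then (if c == 1 then n - 5 else T n c)
  else if (r - c) %% 4 == 1 then n - 3 - c
  else if (r - c) %% 4 == 3 then n - 5 - c else n - 6 - c.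

Variant tspec n c r : nat -> Prop :=
 | TE : c = r -> tspec n c r 0
 | TJ : c <> r -> adjP c r -> tspec n c r 1
 | TBb q s : r + 2 <= c -> c <> r + 3 -> c <> r + 4 -> ~ (c = 3 /\ r = 1) ->
     c + 1 = 4 * q + s -> s < 4 -> tspec n c r (n - 4 + q)
 | TBa q s m : 2 <= c -> r = c + 4 * m + 2 -> c + 1 = 4 * q + s -> s < 4 ->
     tspec n c r (n - 4 + q)
 | TC1 m : c = 1 -> 1 <= m -> r = 4 * m + 3 -> tspec n c r (n - 5)
 | TA1 m : 1 <= m -> r = c + 4 * m + 1 -> tspec n c r (n - 3 - c)
 | TA3 m : 1 <= m -> r = c + 4 * m + 3 -> tspec n c r (n - 5 - c)
 | TA0 m : 1 <= m -> r = c + 4 * m + 4 -> tspec n c r (n - 6 - c).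

Lemma tP n c r : 1 <= c -> tspec n c r (tt n c r).
Proof.
move=> hc; rewrite /tt /T.
have dq := divn_eq (c + 1) 4; have ds := ltn_pmod (c + 1) (isT : 0 < 4).
case: eqP => [->|ne]; first exact: TE.
case: adjbP => [aj|naj]; first exact: TJ.
case: ltnP => [lt|le].
  apply: (@TBb n c r ((c+1) %/ 4) ((c+1) %% 4)) => //; rewrite /adjP in naj; lia.
have dm := divn_eq (r - c) 4.
case: eqP => [m2|m2].
  case: eqP => [c1|c1].
    apply: (@TC1 n c r ((r - c) %/ 4)) => //; rewrite /adjP in naj; lia.
  apply: (@TBa n c r ((c+1) %/ 4) ((c+1) %% 4) ((r - c) %/ 4)) => //; lia.
have ds2 := ltn_pmod (r - c) (isT : 0 < 4).
case: eqP => [m1|m1].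
  apply: (@TA1 n c r ((r - c) %/ 4)); rewrite /adjP in naj; lia.
case: eqP => [m3|m3].
  apply: (@TA3 n c r ((r - c) %/ 4)); rewrite /adjP in naj; lia.
apply: (@TA0 n c r ((r - c) %/ 4 - 1)); rewrite /adjP in naj; lia.
Qed.


Ltac fin := unfold adjP in *; lia.

Ltac upgo n s :=
  exists s; split; [apply/cnbrE; rewrite /adjP; split; lia
  | right; let rr := fresh "rr" in let Hr := fresh "Hr" in
    intros rr Hr; apply cnbrE in Hr; destruct Hr as [? ? ?];
    case: (tP n s rr); [lia|..]; intros; fin].

Lemma up n c r : 7 <= n -> 1 <= c <= n -> 1 <= r <= n -> c <> r ->
  exists s, cnbr n c s /\ (s = r \/ forall r', cnbr n r r' -> tt n s r' + 1 <= tt n c r).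
Proof.
move=> hn hc hr ne; case: (tP n c r); [lia | by move/ne | | | | | | |].
- move=> _ aj; exists r; split; last by left.
  by apply/cnbrE; split => //; right.
- move=> q s0 *.
  case: (leqP 5 c) => c5; first by upgo n (c - 4).
  case: (c =P 4) => c4; first by upgo n 1.
  case: (c =P 3) => c3; first by upgo n 2.
  upgo n 1.
- move=> q s0 m *.
  case: (leqP 5 c) => c5; first by upgo n (c - 4).
  case: (c =P 4) => c4; first by upgo n 1.
  case: (c =P 3) => c3; first by upgo n 2.
  upgo n 1.
- move=> m *; upgo n 3.
- move=> m *; upgo n (c + 1).
- move=> m *; upgo n (c + 3).
- move=> m *; upgo n (c + 4).
Qed.




Ltac dleaf n cc w :=
  exists w; split; [apply/cnbrE; unfold adjP; split; lia
  | case: (tP n cc w); [lia|..]; intros; fin].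

Lemma down n c r c' : 7 <= n -> 1 <= c <= n -> 1 <= r <= n -> 2 <= tt n c r ->
  cnbr n c c' -> exists r', cnbr n r r' /\ tt n c r <= tt n c' r' + 1.
Proof.
move=> hn hc hr ht /cnbrE [_ hc' hcc].
have H9 : c' = c \/ c' = c + 1 \/ c' + 1 = c \/ c' = c + 3 \/ c' + 3 = c \/ c' = c + 4 \/
  c' + 4 = c \/ (c = 1 /\ c' = 3) \/ (c = 3 /\ c' = 1) by unfold adjP in hcc; lia.
move: ht; case: (tP n c r); [lia | by [] | by [] | | | | | | ].
- move=> *;
  case: H9 => [?|[?|[?|[?|[?|[?|[?|[?|?]]]]]]]];
   [ dleaf n c' (r + 0)
   | dleaf n c' (r + 1)
   | case: (leqP (r + 9) c) => ?; [dleaf n c' (r + 0) | case: (leqP c 13) => ?; [case: (leqP c 9) => ?; [case: (leqP r 2) => ?; [case: (leqP c 7) => ?; [case: (leqP c 4) => ?; [dleaf n c' (r + 3) | case: (leqP c 6) => ?; [dleaf n c' (r + 2) | case: (leqP r 1) => ?; [dleaf n c' (r + 0) | dleaf n c' (r - 1)]]] | dleaf n c' (r + 0)] | dleaf n c' (r - 1)] | dleaf n c' (r - 1)] | dleaf n c' (r - 1)]]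
   | dleaf n c' (r + 0)
   | case: (leqP (r + 9) c) => ?; [dleaf n c' (r + 0) | case: (leqP c 13) => ?; [case: (leqP r 4) => ?; [case: (leqP (r + 8) c) => ?; [dleaf n c' (r + 0) | case: (leqP c 4) => ?; [dleaf n c' (r + 4) | case: (leqP (r + 5) c) => ?; [case: (leqP (r + 6) c) => ?; [case: (leqP (r + 7) c) => ?; [case: (leqP c 8) => ?; [dleaf n c' (r + 2) | dleaf n c' (r - 1)] | dleaf n c' (r + 1)] | dleaf n c' (r + 4)] | dleaf n c' (r + 1)]]] | dleaf n c' (r - 3)] | dleaf n c' (r - 3)]]
   | dleaf n c' (r + 0)
   | case: (leqP (r + 9) c) => ?; [dleaf n c' (r + 0) | case: (leqP c 13) => ?; [case: (leqP r 5) => ?; [case: (leqP c 11) => ?; [case: (leqP c 5) => ?; [dleaf n c' (r + 3) | case: (leqP (r + 5) c) => ?; [case: (leqP (r + 6) c) => ?; [case: (leqP (r + 7) c) => ?; [case: (leqP (r + 8) c) => ?; [case: (leqP c 9) => ?; [dleaf n c' (r + 2) | dleaf n c' (r - 1)] | dleaf n c' (r + 1)] | dleaf n c' (r + 4)] | dleaf n c' (r + 3)] | dleaf n c' (r + 0)]] | dleaf n c' (r - 3)] | dleaf n c' (r - 4)] | dleaf n c' (r - 4)]]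
   | exfalso; lia
   | exfalso; lia ].
- move=> *;
  case: H9 => [?|[?|[?|[?|[?|[?|[?|[?|?]]]]]]]];
   [ dleaf n c' (r + 0)
   | case: (leqP n (r + 2)) => ?; [dleaf n c' (r - 3) | dleaf n c' (r + 1)]
   | case: (leqP n (r + 2)) => ?; [dleaf n c' (r - 1) | dleaf n c' (r + 3)]
   | dleaf n c' (r - 1)
   | case: (leqP c 4) => ?; [dleaf n c' (r + 0) | dleaf n c' (r - 3)]
   | dleaf n c' (r + 0)
   | case: (leqP c 5) => ?; [dleaf n c' (r - 1) | dleaf n c' (r + 0)]
   | case: (leqP r 5) => ?; [dleaf n c' (r + 1) | dleaf n c' (r - 3)]
   | case: (leqP r 5) => ?; [dleaf n c' (r + 1) | dleaf n c' (r - 3)] ].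
- move=> *;
  case: H9 => [?|[?|[?|[?|[?|[?|[?|[?|?]]]]]]]];
   [ dleaf n c' (r + 0)
   | dleaf n c' (r + 0)
   | exfalso; lia
   | dleaf n c' (r - 1)
   | exfalso; lia
   | dleaf n c' (r + 0)
   | exfalso; lia
   | case: (leqP n (r + 0)) => ?; [dleaf n c' (r - 3) | dleaf n c' (r + 1)]
   | case: (leqP n (r + 0)) => ?; [dleaf n c' (r - 3) | dleaf n c' (r + 1)] ].
- move=> *;
  case: H9 => [?|[?|[?|[?|[?|[?|[?|[?|?]]]]]]]];
   [ dleaf n c' (r + 0)
   | case: (leqP n (r + 0)) => ?; [dleaf n c' (r - 3) | dleaf n c' (r + 1)]
   | dleaf n c' (r + 0)
   | dleaf n c' (r + 0)
   | dleaf n c' (r + 0)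
   | dleaf n c' (r - 3)
   | dleaf n c' (r + 0)
   | dleaf n c' (r - 1)
   | dleaf n c' (r - 1) ].
- move=> *;
  case: H9 => [?|[?|[?|[?|[?|[?|[?|[?|?]]]]]]]];
   [ dleaf n c' (r + 0)
   | dleaf n c' (r + 0)
   | dleaf n c' (r + 0)
   | case: (leqP n (r + 0)) => ?; [dleaf n c' (r - 3) | dleaf n c' (r + 1)]
   | dleaf n c' (r + 0)
   | dleaf n c' (r - 1)
   | dleaf n c' (r + 0)
   | dleaf n c' (r + 0)
   | dleaf n c' (r + 0) ].
- move=> *;
  case: H9 => [?|[?|[?|[?|[?|[?|[?|[?|?]]]]]]]];
   [ dleaf n c' (r + 0)
   | dleaf n c' (r + 0)
   | dleaf n c' (r + 0)
   | dleaf n c' (r + 0)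
   | dleaf n c' (r + 0)
   | case: (leqP n (r + 0)) => ?; [dleaf n c' (r - 3) | dleaf n c' (r + 1)]
   | dleaf n c' (r + 0)
   | dleaf n c' (r + 0)
   | dleaf n c' (r + 0) ].
Qed.


Ltac fin2 := unfold adjP in *; lia.

Lemma memN n u v : (v \in filter (cnbr n u) (verts n)) = cnbr n u v.
Proof.
rewrite mem_filter /verts mem_iota.
case h: (cnbr n u v); rewrite ?andbF ?andbT //.
move/cnbrE: h => [_ /andP[a b] _]; apply/andP; split => //; lia.
Qed.

Lemma tt_ge2 n c r : 7 <= n -> 1 <= c <= n -> 1 <= r <= n -> ~~ cnbr n c r -> 2 <= tt n c r.
Proof.
move=> hn hc hr hnc.
have hc2 : ~ (c = r \/ adjP c r) by move=> h; move/negP: hnc; apply; apply/cnbrE.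
case: (tP n c r); try lia; intros; fin2.
Qed.

Lemma tt_le1 n c r : 1 <= c -> cnbr n c r -> tt n c r <= 1.
Proof.
move=> hc /cnbrE [_ _ h].
case: (tP n c r); try lia; intros; fin2.
Qed.

Lemma win n k : 7 <= n -> forall c r, 1 <= c <= n -> 1 <= r <= n -> tt n c r <= k ->
  cop_wins n k c r.
Proof.
move=> hn; elim: k => [|k IH] c r hc hr ht.
  rewrite /=; apply/eqP; move: ht; rewrite leqn0 => /eqP.
  case: (tP n c r); try lia; intros; fin2.
rewrite /=; case: (c =P r) => [//|ne] /=.
have [s [hs H]] := @up n c r hn hc hr ne.
apply/hasP; exists s; first by rewrite memN.
case: H => [->|H]; first by rewrite eqxx.
apply/orP; right; apply/allP => r'; rewrite memN => hr'.
have := H r' hr'; move/cnbrE: hs => [_ hs' _]; move/cnbrE: hr' => [_ hr'' _] => h.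
apply: IH => //; lia.
Qed.

Lemma lose n k : 7 <= n -> forall c r, 1 <= c <= n -> 1 <= r <= n -> k < tt n c r ->
  cop_wins n k c r = false.
Proof.
move=> hn; elim: k => [|k IH] c r hc hr ht.
  rewrite /=; apply/negbTE/eqP => E; move: ht; rewrite E /tt eqxx.
  by [].
have hnc : ~~ cnbr n c r by apply/negP => hcr; have := @tt_le1 n c r; case/andP: hc => hc1 _ => /(_ hc1 hcr); lia.
have ne : c != r by apply: contra hnc => /eqP ->; apply/cnbrE; split => //; left.
rewrite /= (negbTE ne) /=; apply/hasPn => s; rewrite memN => hs.
have sr : (s == r) = false.
  by apply/negbTE; apply: contra hnc => /eqP <-.
rewrite sr /=; apply/allPn.
have [r' [hr' H]] := @down n c r s hn hc hr (@tt_ge2 n c r hn hc hr hnc) hs.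
exists r'; first by rewrite memN.
move/cnbrE: hs => [_ hs' _]; move/cnbrE: hr' => [_ hr'' _].
rewrite IH //; lia.
Qed.

Theorem mainTheorem4 (n : nat) : 7 <= n ->
  forall v : nat, cop_start_wins n (n - 4) v <-> (v = 1 \/ v = 2).
Proof.
move=> hn v; split.
- case=> /andP[hv1 hv2] H.
  have [v2|v3] : v <= 2 \/ 3 <= v by lia.
    lia.
  exfalso.
  have [r0 [hr0 ht]] : exists r0, 1 <= r0 <= n /\ n - 4 < tt n v r0.
    case: (leqP (v + 2) n) => hvn.
      exists (v + 2); split; first lia.
      case: (tP n v (v + 2)); try lia; intros; fin2.
    exists (v - 2); split; first lia.
    case: (tP n v (v - 2)); try lia; intros; fin2.
  have := H r0; rewrite /vert hr0 => /(_ isT).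
  by rewrite lose //; apply/andP.
- move=> hv; have hv' : 1 <= v <= n by lia.
  split; first by [].
  move=> r /andP [hr1 hr2]; apply: win => //; first lia.
  case: (tP n v r); try lia; intros; fin2.
Qed.
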